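(* Let $n\ge 2$, $M_1\in\mathbb N^+$, $\gamma$ Euler's constant, and $M=\lceil e(\log(n-1)+\gamma)\rceil+M_1$. Then $$\sum_{m=M+1}^{n}\frac{s_u(n,m)}{n!}\le\exp(-M_1),$$ i.e. the probability $P(s_u(n,m>M))$ that a uniformly random permutation of $\{1,\dots,n\}$ has more than $M$ cycles is at most $\exp(-M_1)$.
   Context: $s_u(n,m)$ denotes the unsigned Stirling number of the first kind (the number of permutations of $\{1,\dots,n\}$ with exactly $m$ cycles), and $P(s_u(n,m))=s_u(n,m)/n!$. $\log$ is the natural logarithm. *)

(* Defs.v *)
From HB Require Import structures.
From mathcomp Require Import all_boot all_order all_algebra all_fingroup.
From mathcomp Require Import all_classical all_reals all_analysis.
Set Implicit Arguments. Unset Strict Implicit. Unset Printing Implicit Defensive.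
Import Order.TTheory GRing.Theory Num.Theory.
Local Open Scope classical_set_scope.
Local Open Scope ring_scope.

(* unsigned Stirling number of the first kind: number of permutations of
   {0,...,n-1} with exactly m cycles (fixed points count as cycles) *)
Definition stirling1u (n m : nat) : nat :=
  #|[set s : {perm 'I_n} | #|porbits s| == m]|.

Definition euler_gamma (R : realType) : R :=
  lim ((fun k : nat => \sum_(1 <= i < k.+1) (i%:R)^-1 - ln (k%:R : R)) @ \oo).

(* Main.v *)
Require Import Defs.
From HB Require Import structures.
From mathcomp Require Import all_boot all_order all_algebra all_fingroup.
From mathcomp Require Import all_classical all_reals all_analysis.
From mathcomp Require Import zify ring lra.
Set Implicit Arguments. Unset Strict Implicit. Unset Printing Implicit Defensive.
Import Order.TTheory GRing.Theory Num.Theory.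
Import numFieldNormedType.Exports.
Local Open Scope classical_set_scope.
Local Open Scope ring_scope.

Section Comb.
Variable T : finType.

Definition cyc (s : {perm T}) := #|porbits s|.

Lemma cyc_tperm (u : {perm T}) a j : u a = a ->
  (cyc (tperm a j * u) + (a != j) = cyc u)%N.
Proof.
move=> ua; have := porbits_mul_tperm u a j; rewrite /cyc.
have -> : (a \in porbit u j) = (a == j).
  rewrite porbit_sym; apply/porbitP/eqP => [[i ->]|<-]; first by rewrite permX_fix.
  by exists 0%N; rewrite expg0 perm1.
case: eqP => [->|_] /=; lia.
Qed.

Lemma cyc1 : cyc 1 = #|T|.
Proof.
rewrite /cyc /porbits card_imset // => x y /eqP; rewrite eq_porbit_mem.
by rewrite porbit.unlock cycle1 imset_set1 /aperm perm1 inE => /eqP.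
Qed.

Lemma perm_onD1 (A : {set T}) a (u : {perm T}) :
  perm_on (A :\ a) u = perm_on A u && (u a == a).
Proof.
apply/idP/andP => [h|[h /eqP ha]].
  split; first by apply: fintype.subset_trans h (subsetDl _ _).
  by apply/eqP; apply: out_perm h _; rewrite !inE eqxx.
apply/fintype.subsetP => x; rewrite inE => hx; rewrite !inE.
have -> : x != a by apply: contraNneq hx => ->; rewrite ha.
exact: (fintype.subsetP h).
Qed.

Lemma perm_onT (s : {perm T}) : perm_on [set: T]%SET s.
Proof. by apply/fintype.subsetP => y _; rewrite finset.in_setT. Qed.

Variable R : comNzRingType.
Variable x : R.

Definition F (A : {set T}) := \sum_(s | perm_on A s) x ^+ cyc s.

Lemma F_split (A : {set T}) a : a \in A ->
  F A = \sum_(j in A) \sum_(u | perm_on (A :\ a) u) x ^+ cyc (tperm a j * u).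
Proof.
move=> aA; rewrite /F.
transitivity (\sum_(s | perm_on A s) \sum_(j in A | (s^-1)%g a == j) x ^+ cyc s).
  apply: eq_bigr => s hs; rewrite (big_pred1 ((s^-1)%g a)) // => j /=.
  apply/andP/eqP => [[_ /eqP <-]|->] //; split => //.
  by rewrite perm_closed ?perm_onV.
rewrite (exchange_big_dep (fun j => j \in A)) /=; last by move=> s j _ /andP[].
apply: eq_bigr => j jA.
rewrite (reindex_onto (fun u => tperm a j * u)%g (fun s => tperm a j * s)%g); last first.
  by move=> s _; rewrite tpermKg.
apply: eq_bigl => u; rewrite tpermKg eqxx andbT perm_onD1.
have tA : perm_on A (tperm a j).
  by apply: fintype.subset_trans (tperm_on a j) _; apply/fintype.subsetP => z; rewrite !inE => /orP[]/eqP->.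
have -> : perm_on A (tperm a j * u)%g = perm_on A u.
  apply/idP/idP => h.
    by rewrite -(tpermKg a j u); apply: perm_onM.
  exact: perm_onM.
congr (_ && _).
rewrite invMg permM tpermV.
rewrite jA /=.
apply/eqP/eqP => [h|h].
  have h2 : (u^-1)%g a = a by rewrite -(tpermK a j ((u^-1)%g a)) h tpermR.
  by rewrite -[in LHS]h2 permKV.
have h2 : (u^-1)%g a = a by rewrite -[in LHS]h permK.
by rewrite h2 tpermL.
Qed.

Lemma F_step (A : {set T}) a : a \in A ->
  x * F A = (x + (#|A|.-1)%:R) * F (A :\ a).
Proof.
move=> aA; rewrite (F_split aA) mulr_sumr (bigD1 a) //= tperm1.
under eq_bigr do rewrite mul1g.
rewrite [in X in _ + X](eq_bigr (fun _ => F (A :\ a))); last first.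
  move=> j /andP[_ ja]; rewrite /F mulr_sumr; apply: eq_bigr => u.
  rewrite perm_onD1 => /andP[_ /eqP ua].
  rewrite -(cyc_tperm j ua).
  have -> : (a != j) = true by rewrite eq_sym.
  by rewrite addn1 exprS.
rewrite sumr_const -/(F _) mulrDl; congr (_ + _).
rewrite mulr_natl; congr (_ *+ _).
rewrite (cardsD1 a) aA /=; apply: eq_card => j; rewrite !inE andbC.
done.
Qed.

Lemma F_closed k (A : {set T}) : #|A| = k ->
  x ^+ k * F A = x ^+ #|T| * \prod_(i < k) (x + i%:R).
Proof.
elim: k A => [|k IH] A hA.
  rewrite big_ord0 mulr1 expr0 mul1r /F (big_pred1 1%g) ?cyc1 // => s /=.
  apply/idP/eqP => [h|->]; last exact: perm_on1.
  by apply: perm_on_id h _; rewrite hA.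
have : (0 < #|A|)%N by rewrite hA.
rewrite card_gt0 => /set0Pn [a aA].
rewrite exprSr -mulrA (F_step aA) hA /= mulrCA.
have hA' : #|A :\ a| = k by move: hA; rewrite (cardsD1 a) aA add1n => -[].
rewrite IH // big_ord_recr /=; ring.
Qed.
End Comb.

Section Gam.
Variable R : realType.

Definition H (k : nat) : R := \sum_(1 <= i < k.+1) (i%:R)^-1.

Lemma HS k : H k.+1 = H k + (k.+1%:R)^-1.
Proof. by rewrite /H big_nat_recr. Qed.

Lemma H0 : H 0 = 0.
Proof. by rewrite /H big_geq. Qed.

Lemma ln_step (a d : R) : 0 < a -> - a < d -> ln (a + d) <= ln a + d / a.
Proof.
move=> a0 da.
have h0 : -1 < d / a by rewrite ltr_pdivlMr // mulN1r.
have h1 : 0 < 1 + d / a by lra.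
have -> : a + d = a * (1 + d / a) by rewrite mulrDr mulr1 mulrCA divff ?mulr1 // gt_eqF.
rewrite lnM ?posrE //; rewrite lerD2l; exact: le_ln1Dx.
Qed.


Definition bs (k : nat) : R := H k - ln (k%:R).
Definition cs (k : nat) : R := H k - ln (k.+1%:R).

Lemma cs_nd : nondecreasing_seq cs.
Proof.
apply/nondecreasing_seqP => k; rewrite /cs HS.
have e2 : k.+2%:R = k.+1%:R + 1 :> R by rewrite -natr1.
have h2 : - (k.+1%:R) < (1 : R).
  by apply: (@lt_le_trans _ _ 0); rewrite ?oppr_lt0 ?ltr0Sn.
have := @ln_step _ _ (ltr0Sn _ _) h2.
rewrite e2 mul1r; move: (H k) (k.+1%:R^-1 : R) (ln (k.+1%:R + 1) : R) (ln k.+1%:R : R) => a b c d; clear e2 h2; lra.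
Qed.

Lemma bs_ni k : (1 <= k)%N -> bs k.+1 <= bs k.
Proof.
move=> k1; rewrite /bs HS.
have h2 : - (k.+1%:R) < (-1 : R) :> R.
  by rewrite ltrN2 ltr1n ltnS.
have := @ln_step _ _ (ltr0Sn _ _) h2.
have e2 : k%:R = k.+1%:R + (-1) :> R by rewrite -natr1 addrK.
rewrite -e2 mulN1r; move: (H k) (k.+1%:R^-1 : R) (ln k%:R : R) (ln k.+1%:R : R) => a b c d; clear e2 h2; lra.
Qed.

Lemma bs_ni_le k m : (1 <= k)%N -> (k <= m)%N -> bs m <= bs k.
Proof.
move=> k1; elim: m => [|m IH] km; first by move: k1; rewrite leqn0 in km; rewrite (eqP km).
have [->|ne] := eqVneq k m.+1; first by [].
have km' : (k <= m)%N by rewrite -ltnS ltn_neqAle ne km.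
apply: le_trans (IH km'); apply: bs_ni; exact: leq_trans km'.
Qed.

Lemma cs_le_bs k : cs k <= bs k.
Proof.
rewrite /cs /bs lerD2l lerN2; case: k => [|k].
  by rewrite ln0 // ln1.
by rewrite ler_ln ?posrE ?(ltr0Sn _ _) // ler_nat.
Qed.

Lemma H_ge1 k : (1 <= k)%N -> 1 <= H k.
Proof.
elim: k => [//|k IH] _; rewrite HS.
case: k IH => [_|k IH]; first by rewrite H0 add0r invr1.
apply: le_trans (IH isT) _; rewrite lerDl invr_ge0 //.
Qed.

Lemma cs0 : cs 0 = 0.
Proof. by rewrite /cs H0 ln1 subr0. Qed.

Lemma gamma_ge j : cs j <= euler_gamma R.
Proof.
have -> : euler_gamma R = limn bs by [].
have cv : cvgn bs.
  apply: (@near_nonincreasing_is_cvgn _ _ 0).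
    exists 1%N => // k hk m km; exact: bs_ni_le.
  by apply: nearW => n; rewrite -cs0; apply: le_trans (cs_le_bs n); apply: cs_nd.
apply: limr_ge => //; exists j => // n /= jn.
by apply: le_trans (cs_le_bs n); apply: cs_nd.
Qed.

End Gam.

Section Main.
Variable R : realType.

Lemma gen_stirling n (x : R) : x != 0 ->
  \sum_(m < n.+1) (stirling1u n m)%:R * x ^+ m = \prod_(i < n) (x + i%:R).
Proof.
move=> x0.
have := F_closed x (cardsT 'I_n); rewrite card_ord => h.
apply: (mulfI (expf_neq0 n x0)); rewrite -h; congr (_ * _).
rewrite /F.
transitivity (\sum_(s : {perm 'I_n}) \sum_(m < n.+1 | cyc s == m) x ^+ m).
  rewrite (exchange_big_dep xpredT) //=; apply: eq_bigr => m _.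
  rewrite /stirling1u (eq_bigl (fun s => s \in [set s | #|porbits s| == m]%SET)); last first.
    by move=> s /=; rewrite finset.inE.
  rewrite sumr_const [LHS]mulr_natl; congr (_ *+ _); apply: eq_card => s; rewrite finset.inE.
  by apply/idP/idP; rewrite in_setE.
rewrite [RHS](eq_bigl xpredT); last by move=> s; rewrite perm_onT.
apply: eq_bigr => s _.
have hs : (cyc s < n.+1)%N.
  by rewrite ltnS /cyc /porbits (leq_trans (leq_imset_card _ _)) // card_ord.
by rewrite (big_pred1 (Ordinal hs)) // => m /=; rewrite eq_sym.
Qed.


Lemma prod_bound n : (1 <= n)%N ->
  \prod_(i < n) (expR 1 + i%:R) / (n`!)%:R <= expR (1 + (expR 1 - 1) * (H R n - 1)) :> R.
Proof.
case: n => // p _; elim: p => [|p IH].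
  rewrite big_ord1 /= HS H0 add0r invr1 subrr mulr0 addr0 addr0.
  by rewrite mulr1.
rewrite big_ord_recr /= factS natrM HS.
have e0 : 0 <= expR 1 :> R by exact: expR_ge0.
have p0 : 0 < p.+2%:R :> R by [].
set P := \prod_(i < p.+1) _.
have -> : P * (expR 1 + p.+1%:R) / (p.+2%:R * (p.+1)`!%:R)
    = (P / (p.+1)`!%:R) * ((expR 1 + p.+1%:R) / p.+2%:R).
  by rewrite invfM; ring.
have -> : 1 + (expR 1 - 1) * (H R p.+1 + p.+2%:R^-1 - 1) =
   (1 + (expR 1 - 1) * (H R p.+1 - 1)) + (expR 1 - 1) / p.+2%:R :> R by ring.
rewrite expRD; apply: ler_pM => //.
- apply: divr_ge0 => //; apply: prodr_ge0 => i _; apply: addr_ge0 => //.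
have -> : (expR 1 + p.+1%:R) / p.+2%:R = 1 + (expR 1 - 1) / p.+2%:R :> R.
  have hp : p.+2%:R != 0 :> R by rewrite pnatr_eq0.
  by field.
exact: expR_ge1Dx.
Qed.

End Main.

Theorem lemma5p2 (R : realType) (n M1 : nat) (hn : (2 <= n)%N) (hM1 : (0 < M1)%N) :
  let M : int := Num.ceil (expR 1 * (ln ((n.-1)%:R : R) + euler_gamma R)) + M1%:Z in
  \sum_(m < n.+1 | M < (m : nat)%:Z) ((stirling1u n m)%:R / (n`!)%:R : R)
    <= expR (- (M1%:R : R)).
Proof.
cbv zeta.
set M := Num.ceil (expR 1 * _) + M1%:Z.
have e2 : 2 < expR 1 :> R by have := expR_gt1Dx (oner_neq0 R).
have hM : expR 1 * (ln ((n.-1)%:R : R) + euler_gamma R) + M1%:R <= M%:~R.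
  by rewrite /M rmorphD /= lerD2r ceil_ge.
have g1 := gamma_ge R 1.
have ln2 : ln (2 : R) < 1.
  by rewrite -[X in _ < X](expRK 1) ltr_ln ?posrE // (lt_trans _ e2).
have gpos : 0 < euler_gamma R.
  apply: lt_le_trans g1; rewrite /cs HS H0 add0r invr1; lra.
have [n2|n3] : n = 2%N \/ (3 <= n)%N by lia.
  subst n.
  have hM2 : 1 < M.
    rewrite -(ltr_int R) /=; apply: lt_le_trans hM.
    have hM1' : 1 <= M1%:R :> R by rewrite ler1n.
    have : 0 < expR 1 * (ln (1%:R : R) + euler_gamma R).
      by rewrite ln1 add0r mulr_gt0.
    lra.
  rewrite big1 => [|m hm]; first exact: expR_ge0.
  have hm3 : (m <= 2)%N by have := ltn_ord m.
  exfalso; move: hm hM2 hm3; clearbody M; lia.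
have [p np] : exists p, n = p.+1 by exists n.-1; lia.
subst n; rewrite /= in hM.
have p2 : (2 <= p)%N by lia.
set e := expR 1 : R.
have e0 : 0 < e by apply: expR_gt0.
have key : (e - 1) * (H R p.+1 - 1) <= e * (ln (p%:R : R) + euler_gamma R).
  have gp := gamma_ge R p; rewrite /cs in gp.
  have pp : 0 < p%:R :> R by rewrite ltr0n; lia.
  have hl : ln (p.+1%:R : R) <= ln p%:R + 1 / p%:R.
    have := @ln_step R p%:R 1 pp; rewrite -natr1; apply.
    by apply: (@lt_le_trans _ _ 0); rewrite ?oppr_lt0.
  have Hp : 1 <= H R p by apply: H_ge1; lia.
  have r2 : (p%:R : R)^-1 <= 2^-1.
    by rewrite lef_pV2 ?posrE // ler_nat.
  have q3 : (p.+1%:R : R)^-1 <= 3^-1.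
    by rewrite lef_pV2 ?posrE // ler_nat.
  have q0 : 0 <= (p.+1%:R : R)^-1 by rewrite invr_ge0.
  have er : e * (p%:R)^-1 <= e * 2^-1 by rewrite ler_wpM2l // ltW.
  have eq : e * (p.+1%:R)^-1 <= e * 3^-1 by rewrite ler_wpM2l // ltW.
  have eg : e * (H R p - ln p%:R - (p%:R)^-1) <= e * euler_gamma R.
    rewrite ler_pM2l //; move: gp hl; rewrite mul1r; move: (H R p) (ln (p%:R : R)) (ln (p.+1%:R : R)) (euler_gamma R) ((p%:R : R)^-1) => *; lra.
  rewrite HS.
  move: er eq eg; move: (H R p) (ln (p%:R : R)) (euler_gamma R) ((p%:R : R)^-1) ((p.+1%:R : R)^-1) Hp q0 e2 => a b c d f *.
  nra.
set N := ((p.+1)`!)%:R : R.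
have N0 : 0 < N by rewrite /N ltr0n fact_gt0.
apply: (@le_trans _ _ (\sum_(m < p.+2) (stirling1u p.+1 m)%:R / N * expR (m%:R - (M%:~R + 1)))).
  rewrite [X in _ <= X](bigID (fun m : 'I_p.+2 => M < (m:nat)%:Z)) /=.
  rewrite -[X in X <= _]addr0; apply: lerD.
    apply: ler_sum => m hm; apply: ler_peMr; first by apply: divr_ge0; rewrite ?ler0n ?ltW.
    apply: le_trans (expR_ge1Dx _); rewrite lerDl subr_ge0.
    have : M + 1 <= (m : nat)%:Z by rewrite lezD1.
    by rewrite -(ler_int R) rmorphD.
  apply: sumr_ge0 => m _; apply: mulr_ge0; last exact: expR_ge0.
  by apply: divr_ge0; rewrite ?ler0n ?ltW.
have -> : \sum_(m < p.+2) (stirling1u p.+1 m)%:R / N * expR (m%:R - (M%:~R + 1)) =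
    expR (- (M%:~R + 1)) * (\prod_(i < p.+1) (e + i%:R) / N).
  rewrite -(@gen_stirling R p.+1 e) ?gt_eqF // mulr_suml mulr_sumr.
  apply: eq_bigr => m _; rewrite expRD -expRM_natl mulr1 -/e; ring.
apply: le_trans (ler_wpM2l (expR_ge0 _) (prod_bound R (isT : (0 < p.+1)%N))) _.
rewrite -expRD ler_expR.
move: key hM; rewrite -/e.
move: (e) (H R p.+1) (ln (p%:R : R)) (euler_gamma R) (M%:~R : R) (M1%:R : R) => *.
lra.
Qed.
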